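(* Let $H$ be a simple $3$-connected graph and $\mathcal{F}$ an arbitrary family of injective maps from $X=\{a,b,c,d\}$ to $V(H)$. Let $G$ be a $2$-connected graph with $X\subseteq V(G)$ and a $2$-separation $(A,B)$ with $A\cap B=\{u,v\}$. Suppose $u,v\in X$, and that some vertex of $X\setminus\{u,v\}$ lies in $A\setminus\{u,v\}$ and some vertex of $X\setminus\{u,v\}$ lies in $B\setminus\{u,v\}$. Then $G$ does not have an $H(X)$-minor.
   Context: A $2$-separation is a pair $(A,B)$ with $A\cup B=V(G)$, $|A\cap B|\le2$ and no edge between $A\setminus B$ and $B\setminus A$. An $H$-model in $G$ is a family $\{G_x:x\in V(H)\}$ of pairwise vertex-disjoint connected subgraphs of $G$ such that for every edge $xy\in E(H)$ some vertex of $G_x$ is adjacent in $G$ to some vertex of $G_y$. For injective $\pi:X\to V(H)$, $G$ has an $H(X)$-minor with respect to $\pi$ if there is an $H$-model with $w\in V(G_{\pi(w)})$ for all $w\in X$; $G$ has an $H(X)$-minor (with respect to $\mathcal{F}$) if this holds for some $\pi\in\mathcal{F}$. *)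

(* Defs.v *)
From mathcomp Require Import all_boot.
Set Implicit Arguments. Unset Strict Implicit. Unset Printing Implicit Defensive.

Definition simple_graph (T : finType) (e : rel T) : Prop :=
  symmetric e /\ irreflexive e.

Definition restr (T : finType) (e : rel T) (S : {set T}) : rel T :=
  [rel x y | [&& e x y, x \in S & y \in S]].

Definition connected_in (T : finType) (e : rel T) (S : {set T}) : Prop :=
  forall x y, x \in S -> y \in S -> connect (restr e S) x y.

Definition k_connected (T : finType) (e : rel T) (k : nat) : Prop :=
  k < #|T| /\ forall S : {set T}, #|S| < k -> connected_in e (~: S).

Definition two_separation (T : finType) (e : rel T) (A B : {set T}) : Prop :=
  [/\ A :|: B = setT, #|A :&: B| <= 2 &
      forall x y, x \in A :\: B -> y \in B :\: A -> ~~ e x y].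

Definition is_model (V T : finType) (eH : rel V) (eG : rel T)
    (M : V -> {set T}) : Prop :=
  [/\ forall x, M x != set0,
      forall x, connected_in eG (M x),
      forall x y, x != y -> [disjoint M x & M y] &
      forall x y, eH x y -> exists p q, [/\ p \in M x, q \in M y & eG p q]].

(* X = {a,b,c,d} is labelled by 'I_4 and embedded in V(G) by xG.
   G has an H(X)-minor w.r.t. pi : X -> V(H). *)
Definition has_HX_minor_wrt (V T : finType) (eH : rel V) (eG : rel T)
    (xG : 'I_4 -> T) (pi : 'I_4 -> V) : Prop :=
  exists M : V -> {set T}, is_model eH eG M /\ forall w, xG w \in M (pi w).

Definition has_HX_minor (V T : finType) (eH : rel V) (eG : rel T)
    (xG : 'I_4 -> T) (F : {set {ffun 'I_4 -> V}}) : Prop :=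
  exists2 pi, pi \in F & has_HX_minor_wrt eH eG xG pi.

(* Main.v *)
Require Import Defs.
From mathcomp Require Import all_boot.

Lemma connect_pres (T : finType) (e : rel T) (P : pred T) x y :
  (forall a b, P a -> e a b -> P b) -> connect e x y -> P x -> P y.
Proof.
move=> H /connectP [s pth ->]; elim: s x pth => [|z s IH] x //=.
case/andP => exz pz Px; exact: (IH z pz (H _ _ Px exz)).
Qed.

Theorem mainTheorem13 (V : finType) (eH : rel V) (T : finType) (eG : rel T)
    (F : {set {ffun 'I_4 -> V}}) (xG : 'I_4 -> T)
    (A B : {set T}) (u v : T) :
  simple_graph eH -> k_connected eH 3 ->
  (forall pi, pi \in F -> injective pi) ->
  simple_graph eG -> k_connected eG 2 ->
  injective xG ->
  two_separation eG A B -> A :&: B = [set u; v] ->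
  (exists i, xG i = u) -> (exists j, xG j = v) ->
  (exists w, xG w \notin [set u; v] /\ xG w \in A :\: [set u; v]) ->
  (exists w, xG w \notin [set u; v] /\ xG w \in B :\: [set u; v]) ->
  ~ has_HX_minor eH eG xG F.
Proof.
move=> _ [_ HconH] injF _ _ injxG [ABT _ sepAB] ABuv [i xi] [j xj]
  [w1 [nw1 w1A]] [w2 [nw2 w2B]] [pi piF [M [[M0 Mcon Mdis Medge] Mx]]].
set p := pi i; set q := pi j.
have hS : #|[set p; q]| < 3 by rewrite cards2; case: (p != q).
have conS := HconH _ hS.
have stepG : forall a b, a \in A :\: B -> eG a b -> b \notin [set u; v] ->
    b \in A :\: B.
  move=> a b aAB eab buv; rewrite -ABuv in buv.
  have: b \in A :|: B by rewrite ABT inE.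
  move: (sepAB a b aAB); rewrite eab /=.
  rewrite !inE in buv *.
  case: (b \in A) buv; case: (b \in B) => //= _ H _; exact: H.
have avoid : forall z, z != p -> z != q -> forall s, s \in M z ->
    s \notin [set u; v].
  move=> z zp zq s sz; rewrite !inE; apply/norP; split; apply/eqP => e.
    have : u \in M p by rewrite -xi Mx.
    by rewrite -e (disjointFr (Mdis z p zp) sz).
  have : v \in M q by rewrite -xj Mx.
  by rewrite -e (disjointFr (Mdis z q zq) sz).
have sideG : forall z, z != p -> z != q -> forall a s, a \in M z ->
    a \in A :\: B -> s \in M z -> s \in A :\: B.
  move=> z zp zq a s az aAB sz.
  apply: (@connect_pres _ _ (fun t => t \in A :\: B) _ _ _ (Mcon z a s az sz) aAB).
  move=> c d cAB /= /andP [ecd /andP [_ dz]].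
  exact: (stepG c d cAB ecd (avoid z zp zq d dz)).
have neq : forall w, xG w \notin [set u; v] -> (pi w != p) && (pi w != q).
  move=> w nw; apply/andP; split; apply/eqP => /(injF _ piF) e;
    by move: nw; rewrite e ?xi ?xj !inE eqxx ?orbT.
have inS : forall w, xG w \notin [set u; v] -> pi w \in ~: [set p; q].
  move=> w /neq /andP [a b]; by rewrite !inE negb_or a b.
case/andP: (neq _ nw1) => n1 n2.
case/andP: (neq _ nw2) => n3 n4.
have w1AB : xG w1 \in A :\: B.
  move: w1A nw1; rewrite -ABuv !inE.
  by case: (xG w1 \in A); case: (xG w1 \in B).
have w2BA : xG w2 \in B :\: A.
  move: w2B nw2; rewrite -ABuv !inE.
  by case: (xG w2 \in A); case: (xG w2 \in B).
have start : M (pi w1) \subset A :\: B.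
  apply/subsetP => s sM; exact: (sideG _ n1 n2 _ s (Mx w1) w1AB sM).
have step : forall z z', M z \subset A :\: B -> restr eH (~: [set p; q]) z z' ->
    M z' \subset A :\: B.
  move=> z z' /subsetP zAB /andP [ezz' /andP [_ z'S]].
  move: z'S; rewrite !inE negb_or => /andP [z'p z'q].
  case: (Medge z z' ezz') => a [b [az bz' eab]].
  have bAB := stepG a b (zAB a az) eab (avoid z' z'p z'q b bz').
  apply/subsetP => s sM; exact: (sideG _ z'p z'q _ s bz' bAB sM).
have := @connect_pres _ _ (fun z => M z \subset A :\: B) _ _ step
  (conS _ _ (inS _ nw1) (inS _ nw2)) start.
move=> /subsetP /(_ _ (Mx w2)).
by move: w2BA; rewrite !inE; case: (xG w2 \in A); case: (xG w2 \in B).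
Qed.
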